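(* Let $n\ge 2k\ge 2$, let $S\subseteq\{0,1,\ldots,k-1\}$ be nonempty, and let $X=\bigcup_{i\in S}J(n,k,i)$. If $X$ admits perfect state transfer between two distinct vertices, then $n=2k$.
   Context: $J(n,k,i)$ is the graph on the $k$-subsets of $\{1,\ldots,n\}$ with $A\sim B$ iff $|A\cap B|=i$; the union $\bigcup_{i\in S}J(n,k,i)$ is the graph on the same vertex set with $A\sim B$ iff $|A\cap B|\in S$. For a simple graph $X$ with adjacency matrix $A$, let $\mathcal{H}_X(t)=e^{itA}$; there is perfect state transfer between vertices $u\ne v$ if $|\mathcal{H}_X(\tau)_{u,v}|=1$ for some $\tau>0$. *)

(* Defs.v *)
From Stdlib Require Import Reals Factorial.
From mathcomp Require Import all_boot.
Set Implicit Arguments. Unset Strict Implicit. Unset Printing Implicit Defensive.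

Definition vtx (n k : nat) : {set {set 'I_n}} := [set A : {set 'I_n} | #|A| == k].

Definition jadj (n k : nat) (S : {set 'I_k}) (A B : {set 'I_n}) : bool :=
  [&& A \in vtx n k, B \in vtx n k & [exists i in S, #|A :&: B| == nat_of_ord i]].

(* (A^m)_{u,v} for the adjacency matrix A of the graph: number of walks. *)
Fixpoint walks (n k : nat) (S : {set 'I_k}) (m : nat) (u v : {set 'I_n}) : nat :=
  match m with
  | 0 => nat_of_bool (u == v)
  | m'.+1 => \sum_(w in vtx n k) (jadj S u w * walks S m' w v)
  end.

(* e^{itA} = sum_m (it)^m A^m / m!; since A is real, its (u,v) entry has
   real part  sum_j (-1)^j t^(2j)   (A^(2j))_{uv}   / (2j)!
   imag part  sum_j (-1)^j t^(2j+1) (A^(2j+1))_{uv} / (2j+1)!  *)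
Definition expRe_term n k (S : {set 'I_k}) (t : R) (u v : {set 'I_n}) (j : nat) : R :=
  Rdiv (Rmult (Rmult (pow (-1) j) (pow t (2 * j))) (INR (walks S (2 * j) u v)))
       (INR (Factorial.fact (2 * j))).

Definition expIm_term n k (S : {set 'I_k}) (t : R) (u v : {set 'I_n}) (j : nat) : R :=
  Rdiv (Rmult (Rmult (pow (-1) j) (pow t (2 * j + 1))) (INR (walks S (2 * j + 1) u v)))
       (INR (Factorial.fact (2 * j + 1))).

Definition pst n k (S : {set 'I_k}) (u v : {set 'I_n}) : Prop :=
  exists tau : R, Rlt R0 tau /\
    exists re im : R,
      infinite_sum (expRe_term S tau u v) re /\
      infinite_sum (expIm_term S tau u v) im /\
      Rplus (Rmult re re) (Rmult im im) = R1.

(* Main.v *)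
Require Import Defs.
From Stdlib Require Import Reals Factorial Lra Psatz.
From Coquelicot Require Import Coquelicot.
From mathcomp Require Import all_boot zify.
Set Implicit Arguments. Unset Strict Implicit. Unset Printing Implicit Defensive.

Section Comb.
Variables (n k : nat) (S : {set 'I_k}).

Lemma jadjC (A B : {set 'I_n}) : jadj S A B = jadj S B A.
Proof. by rewrite /jadj setIC andbCA. Qed.

Lemma jadj_le1 (A B : {set 'I_n}) : (jadj S A B <= 1)%N.
Proof. by case: (jadj S A B). Qed.

Lemma walks_out m (x w : {set 'I_n}) : x \in vtx n k -> w \notin vtx n k -> walks S m x w = 0%N.
Proof.
elim: m x => [|m IH] x Hx Hw /=.
  by case: eqP => // E; rewrite -E Hx in Hw.
by rewrite big1 // => y Hy; rewrite IH ?muln0.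
Qed.

Lemma walks_add p q (x y : {set 'I_n}) : x \in vtx n k ->
  walks S (p + q) x y = (\sum_(w in vtx n k) walks S p x w * walks S q w y)%N.
Proof.
elim: p x => [|p IH] x Hx.
  rewrite add0n /= (bigD1 x) //= eqxx mul1n big1 ?addn0 // => w /andP[_ Hw].
  by rewrite eq_sym (negbTE Hw).
rewrite addSn /=.
transitivity (\sum_(z in vtx n k) \sum_(w in vtx n k)
   jadj S x z * (walks S p z w * walks S q w y))%N.
  by apply: eq_bigr => z Hz; rewrite IH // big_distrr.
rewrite exchange_big /=; apply: eq_bigr => w _.
by rewrite big_distrl /=; apply: eq_bigr => z _; rewrite mulnA.
Qed.

Lemma walks1 (w y : {set 'I_n}) : y \in vtx n k -> walks S 1 w y = jadj S w y.
Proof.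
move=> Hy /=; rewrite (bigD1 y) //= eqxx muln1 big1 ?addn0 // => z /andP[_ Hz].
by rewrite (negbTE Hz) muln0.
Qed.

Lemma walks_sym m (x y : {set 'I_n}) : x \in vtx n k -> y \in vtx n k -> walks S m x y = walks S m y x.
Proof.
elim: m x y => [|m IH] x y Hx Hy; first by rewrite /= eq_sym.
have -> : walks S m.+1 x y = walks S (m + 1) x y by rewrite addn1.
have -> : walks S m.+1 y x = walks S (1 + m) y x by [].
rewrite (walks_add _ _ _ Hx) (walks_add _ _ _ Hy); apply: eq_bigr => w Hw.
by rewrite walks1 // (walks1 _ Hw) IH // jadjC mulnC.
Qed.

Lemma walks_pair p q (u : {set 'I_n}) : u \in vtx n k ->
  (\sum_(w in vtx n k) walks S p u w * walks S q u w)%N = walks S (p + q) u u.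
Proof.
move=> Hu; rewrite walks_add //; apply: eq_bigr => w Hw.
by rewrite (walks_sym q Hu Hw).
Qed.

Lemma walks_bound m (x y : {set 'I_n}) : (walks S m x y <= #|vtx n k| ^ m)%N.
Proof.
elim: m x => [|m IH] x /=; first by case: (x == y).
rewrite expnS -[X in (_ <= X * _)%N]sum1_card big_distrl /=.
apply: leq_sum => z _; exact: leq_mul (jadj_le1 x z) (IH z).
Qed.

Variable f : 'I_n -> 'I_n.
Hypothesis finj : injective f.
Let img (A : {set 'I_n}) := f @: A.

Lemma img_inj : injective img.
Proof. exact: imset_inj. Qed.

Lemma img_vtx A : (img A \in vtx n k) = (A \in vtx n k).
Proof. by rewrite !inE /img card_imset. Qed.

Lemma jadj_img A B : jadj S (img A) (img B) = jadj S A B.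
Proof.
rewrite /jadj !img_vtx /img -imsetI; last exact: (in2W finj).
by rewrite card_imset.
Qed.

Lemma walks_img m x y : walks S m (img x) (img y) = walks S m x y.
Proof.
elim: m x => [|m IH] x /=.
  by rewrite (inj_eq img_inj).
rewrite (reindex_inj img_inj) /=.
by apply: eq_big => [w|w _]; rewrite ?img_vtx // jadj_img IH.
Qed.
End Comb.

Definition swap n (a b x : 'I_n) : 'I_n := if x == a then b else if x == b then a else x.

Lemma swapK n (a b : 'I_n) : involutive (swap a b).
Proof.
move=> x; rewrite /swap.
case: (eqVneq x a) => [->|xa]; first by rewrite eqxx; case: eqVneq.
case: (eqVneq x b) => [->|xb]; first by rewrite eqxx.
by rewrite (negbTE xa) (negbTE xb).
Qed.

Lemma swap_inj n (a b : 'I_n) : injective (swap a b).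
Proof. exact: inv_inj (swapK a b). Qed.

Lemma exists_swap n k (u v : {set 'I_n}) :
  u \in vtx n k -> v \in vtx n k -> u != v -> (2 * k < n)%N ->
  exists a b : 'I_n, swap a b @: u = u /\ swap a b @: v != v.
Proof.
rewrite !inE => /eqP Hu /eqP Hv Huv Hn.
have [a Ha] : exists a, a \in v :\: u.
  apply/set0Pn; apply: contraNneq Huv => E.
  rewrite eq_sym eqEcard Hu Hv leqnn andbT.
  by rewrite -setD_eq0 E.
have [b Hb] : exists b, b \in ~: (u :|: v).
  apply/set0Pn; rewrite -card_gt0.
  have := cardsC (u :|: v); rewrite card_ord => E.
  have : (#|u :|: v| <= 2 * k)%N by rewrite cardsU Hu Hv; lia.
  lia.
move: Ha Hb; rewrite !inE negb_or => /andP[Hau Hav] /andP[Hbu Hbv].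
exists a, b; split.
  rewrite -[RHS]imset_id; apply: eq_in_imset => x Hx /=.
  rewrite /swap; case: eqP => [E|_]; first by rewrite -E Hx in Hau.
  by case: eqP => [E|_] //; rewrite -E Hx in Hbu.
apply/negP => /eqP E.
have : b \in swap a b @: v.
  by apply/imsetP; exists a => //; rewrite /swap eqxx.
by rewrite E (negbTE Hbv).
Qed.
Local Open Scope R_scope.

Definition rsum {T : Type} (l : seq T) (g : T -> R) : R :=
  foldr (fun w acc => g w + acc) 0 l.

Lemma rsum_INR {T : Type} (l : seq T) (F : T -> nat) :
  INR (\sum_(w <- l) F w)%N = rsum l (fun w => INR (F w)).
Proof.
elim: l => [|a l IH]; first by rewrite big_nil.
by rewrite big_cons /= plus_INR IH.
Qed.

Lemma rsum_scal {T : Type} (l : seq T) c g :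
  rsum l (fun w => c * g w) = c * rsum l g.
Proof. elim: l => [|a l IH] /=; [ring | rewrite IH; ring]. Qed.

Lemma rsum_plus {T : Type} (l : seq T) g h :
  rsum l (fun w => g w + h w) = rsum l g + rsum l h.
Proof. elim: l => [|a l IH] /=; [ring | rewrite IH; ring]. Qed.

Lemma rsum_ext {T : Type} (l : seq T) g h :
  (forall w, g w = h w) -> rsum l g = rsum l h.
Proof. by move=> E; elim: l => [|a l IH] //=; rewrite IH E. Qed.

Lemma rsum_sum_f {T : Type} (l : seq T) (F : T -> nat -> R) m :
  rsum l (fun w => sum_f_R0 (F w) m) = sum_f_R0 (fun j => rsum l (fun w => F w j)) m.
Proof.
elim: m => [|m IH] /=; first by [].
by rewrite rsum_plus IH.
Qed.

Lemma is_series_zero : is_series (fun _ : nat => 0) 0.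
Proof.
apply is_series_Reals => e He; exists 0%nat => m _.
rewrite /R_dist sum_cte Rmult_0_l Rminus_0_r Rabs_R0; exact He.
Qed.

Lemma is_series_rsum {T : Type} (l : seq T) (F : T -> nat -> R) (L : T -> R) :
  (forall w, is_series (F w) (L w)) ->
  is_series (fun j => rsum l (fun w => F w j)) (rsum l L).
Proof.
move=> H; elim: l => [|a l IH] /=.
  exact: is_series_zero.
exact: (is_series_plus _ _ _ _ (H a) IH).
Qed.

Lemma rsum_ge0 {T : Type} (l : seq T) g : (forall w, 0 <= g w) -> 0 <= rsum l g.
Proof. move=> H; elim: l => [|a l IH] /=; [lra | have := H a; lra]. Qed.

Lemma filter_notin {T : eqType} (l : seq T) x : x \notin l -> filter (predC1 x) l = l.
Proof.
move=> H; apply/all_filterP/allP => y Hy /=.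
by apply: contraNneq H => <-.
Qed.

Lemma rsum_filter {T : eqType} (l : seq T) g x : uniq l -> x \in l ->
  rsum l g = g x + rsum (filter (predC1 x) l) g.
Proof.
elim: l => [|a l IH] //= /andP[Hal Hu]; rewrite inE.
case: (eqVneq x a) => [E _|xa /= Hx].
  by rewrite E /= filter_notin.
rewrite (IH Hu Hx); ring.
Qed.

Lemma rsum_ge2 {T : eqType} (l : seq T) g x y : uniq l -> x \in l -> y \in l -> x != y ->
  (forall w, 0 <= g w) -> g x + g y <= rsum l g.
Proof.
move=> Hu Hx Hy xy Hg; rewrite (rsum_filter g Hu Hx).
have Hy' : y \in filter (predC1 x) l by rewrite mem_filter /= eq_sym xy.
rewrite (rsum_filter g (filter_uniq _ Hu) Hy').
have := rsum_ge0 (filter (predC1 y) (filter (predC1 x) l)) Hg; lra.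
Qed.

Lemma sum_split (f : nat -> R) m :
  sum_f_R0 f (2 * m + 2)%N =
  sum_f_R0 (fun j => f (2 * j)%N) m.+1 + sum_f_R0 (fun j => f (2 * j + 1)%N) m.
Proof.
elim: m => [|m IH].
  have -> : (2 * 0 + 2 = 2)%N by []. rewrite /=. rewrite (_ : (2 * 0 = 0)%N) // (_ : (2 * 1 = 2)%N) // (_ : (0 + 1 = 1)%N) //; ring.
have -> : (2 * m.+1 + 2 = (2 * m + 2).+2)%N by lia.
rewrite tech5 tech5 IH.
rewrite [sum_f_R0 (fun j => f (2*j)%N) m.+2]tech5 [sum_f_R0 (fun j => f (2*j+1)%N) m.+1]tech5 /=.
have -> : (2 * m.+2 = (2 * m + 2).+2)%N by lia.
have -> : (2 * m.+1 + 1 = (2 * m + 2).+1)%N by lia.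
ring.
Qed.

Lemma m1_even j : (-1) ^ (2 * j)%N = 1.
Proof. exact: pow_1_even. Qed.
Lemma m1_odd j : (-1) ^ (2 * j + 1)%N = -1.
Proof. have -> : (2 * j + 1 = (2 * j).+1)%N by lia. exact: pow_1_odd. Qed.

Lemma binom_even_odd m :
  sum_f_R0 (fun j => Binomial.C (2 * m + 2) (2 * j)) m.+1 =
  sum_f_R0 (fun j => Binomial.C (2 * m + 2) (2 * j + 1)) m.
Proof.
have := Binomial.binomial (-1) 1 (2 * m + 2).
have -> : -1 + 1 = 0 by ring.
rewrite pow_ne_zero; last by lia.
rewrite sum_split.
set N := (2 * m + 2)%N.
have E1 : sum_f_R0 (fun j => Binomial.C N (2 * j) * (-1) ^ (2 * j) * 1 ^ (N - 2 * j)%coq_nat) m.+1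
   = sum_f_R0 (fun j => Binomial.C N (2 * j)) m.+1.
  by apply: PartSum.sum_eq => i _; rewrite m1_even pow1; ring.
have E2 : sum_f_R0 (fun j => Binomial.C N (2 * j + 1) * (-1) ^ (2 * j + 1) * 1 ^ (N - (2 * j + 1))%coq_nat) m
   = sum_f_R0 (fun j => Binomial.C N (2 * j + 1) * (-1)) m.
  by apply: PartSum.sum_eq => i _; rewrite m1_odd pow1; ring.
rewrite E1 E2 -scal_sum; lra.
Qed.

Lemma fact_even_odd m :
  sum_f_R0 (fun j => / (INR (fact (2 * j)) * INR (fact (2 * (m.+1 - j))))) m.+1 =
  sum_f_R0 (fun j => / (INR (fact (2 * j + 1)) * INR (fact (2 * (m - j) + 1)))) m.
Proof.
set N := (2 * m + 2)%N.
have HF := INR_fact_neq_0 N.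
rewrite (PartSum.sum_eq _ (fun j => Binomial.C N (2 * j) * / INR (fact N))); last first.
  move=> i Hi; rewrite /Binomial.C.
  have -> : (N - 2 * i)%coq_nat = (2 * (m.+1 - i))%N by rewrite /N; lia.
  have := INR_fact_neq_0 (2 * i); have := INR_fact_neq_0 (2 * (m.+1 - i)).
  move=> H1 H2; field; auto.
rewrite [RHS](PartSum.sum_eq _ (fun j => Binomial.C N (2 * j + 1) * / INR (fact N))); last first.
  move=> i Hi; rewrite /Binomial.C.
  have -> : (N - (2 * i + 1))%coq_nat = (2 * (m - i) + 1)%N by rewrite /N; lia.
  have := INR_fact_neq_0 (2 * i + 1); have := INR_fact_neq_0 (2 * (m - i) + 1).
  move=> H1 H2; field; auto.
by rewrite -!scal_sum binom_even_odd.
Qed.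

Lemma INR_expn a m : INR (a ^ m)%N = INR a ^ m.
Proof. elim: m => [|m IH] //; by rewrite expnS mult_INR IH. Qed.

Lemma exp_ex x : ex_series (fun j => x ^ j / INR (fact j)).
Proof.
exists (exp x); apply/is_series_Reals.
have := proj2_sig (exist_exp x); rewrite /exp_in /exp => H.
move=> e He; have [N HN] := H e He; exists N => m Hm.
rewrite (PartSum.sum_eq _ (fun i => / INR (fact i) * x ^ i)); first exact: HN.
move=> i _; rewrite /Rdiv; ring.
Qed.

Section Core.
Variables (n k : nat) (S : {set 'I_k}) (t : R) (u : {set 'I_n}).
Hypotheses (ht : 0 < t) (Hu : u \in vtx n k).

Definition aa m w := t ^ m * INR (walks S m u w) / INR (fact m).

Lemma re_eq w j : expRe_term S t u w j = (-1) ^ j * aa (2 * j) w.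
Proof. rewrite /expRe_term /aa /Rdiv; ring. Qed.
Lemma im_eq w j : expIm_term S t u w j = (-1) ^ j * aa (2 * j + 1) w.
Proof. rewrite /expIm_term /aa /Rdiv; ring. Qed.

Lemma aa_ge0 m w : 0 <= aa m w.
Proof.
rewrite /aa /Rdiv; apply: Rmult_le_pos; last exact/Rlt_le/Rinv_0_lt_compat/INR_fact_lt_0.
apply: Rmult_le_pos; [apply: pow_le; lra | exact: pos_INR].
Qed.

Definition NN := INR #|vtx n k|.

Lemma aa_le m w : aa m w <= (t * NN) ^ m / INR (fact m).
Proof.
rewrite /aa /Rdiv Rpow_mult_distr; apply: Rmult_le_compat_r.
  exact/Rlt_le/Rinv_0_lt_compat/INR_fact_lt_0.
apply: Rmult_le_compat_l; first by apply: pow_le; lra.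
rewrite /NN -INR_expn; apply: le_INR; apply/leP; exact: walks_bound.
Qed.

Lemma Rabs_sgn j x : 0 <= x -> Rabs ((-1) ^ j * x) = x.
Proof. by move=> H; rewrite Rabs_mult pow_1_abs Rabs_pos_eq //; ring. Qed.

Lemma inv_fact_le j : / INR (fact (2 * j)) <= / INR (fact j).
Proof.
apply: Rinv_le_contravar; first exact: INR_fact_lt_0.
apply: le_INR; apply: fact_le; apply/leP; lia.
Qed.

Lemma inv_fact_le' j : / INR (fact (2 * j + 1)) <= / INR (fact j).
Proof.
apply: Rinv_le_contravar; first exact: INR_fact_lt_0.
apply: le_INR; apply: fact_le; apply/leP; lia.
Qed.

Lemma tN_ge0 : 0 <= t * NN.
Proof. apply: Rmult_le_pos; [lra | exact: pos_INR]. Qed.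

Lemma ex_re w : ex_series (fun j => Rabs (expRe_term S t u w j)).
Proof.
apply: (ex_series_le _ (fun j => ((t * NN) ^ 2) ^ j / INR (fact j))); last exact: exp_ex.
move=> j; rewrite /norm /= /abs /= Rabs_Rabsolu re_eq (Rabs_sgn _ (aa_ge0 _ _)).
apply: Rle_trans (aa_le _ _) _.
have -> : (t * NN) ^ (2 * j) = ((t * NN) ^ 2) ^ j by exact: pow_mult.
rewrite /Rdiv; apply: Rmult_le_compat_l; last exact: inv_fact_le.
apply: pow_le; apply: pow_le; exact: tN_ge0.
Qed.

Lemma ex_im w : ex_series (fun j => Rabs (expIm_term S t u w j)).
Proof.
apply: (ex_series_le _ (fun j => scal (t * NN) (((t * NN) ^ 2) ^ j / INR (fact j))));
  last exact/ex_series_scal_l/exp_ex.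
move=> j; rewrite /norm /= /abs /= Rabs_Rabsolu im_eq (Rabs_sgn _ (aa_ge0 _ _)).
apply: Rle_trans (aa_le _ _) _.
have -> : (t * NN) ^ (2 * j + 1) = (t * NN) * ((t * NN) ^ 2) ^ j.
  have -> : (2 * j + 1 = (2 * j).+1)%N by lia.
  by rewrite /= -(pow_mult (t * NN) 2 j).
rewrite /scal /= /mult /= /Rdiv Rmult_assoc.
apply: Rmult_le_compat_l; first exact: tN_ge0.
apply: Rmult_le_compat_l; last exact: inv_fact_le'.
apply: pow_le; have := tN_ge0; nra.
Qed.

Lemma pairR p q : rsum (enum (vtx n k)) (fun w => aa p w * aa q w) =
  t ^ (p + q) * INR (walks S (p + q) u u) / (INR (fact p) * INR (fact q)).
Proof.
rewrite (@rsum_ext _ _ _ (fun w => (t ^ p * t ^ q / (INR (fact p) * INR (fact q))) *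
   INR (walks S p u w * walks S q u w)%N)); last first.
  move=> w; rewrite mult_INR /aa /Rdiv.
  have := INR_fact_neq_0 p; have := INR_fact_neq_0 q => H1 H2.
  field; auto.
rewrite rsum_scal -rsum_INR big_enum /= walks_pair //.
have -> : t ^ (p + q) = t ^ p * t ^ q by exact: pow_add.
rewrite /Rdiv; ring.
Qed.

Definition RRt w m := sum_f_R0 (fun j => expRe_term S t u w j * expRe_term S t u w (m - j)%coq_nat) m.
Definition IIt w m := sum_f_R0 (fun j => expIm_term S t u w j * expIm_term S t u w (m - j)%coq_nat) m.

Lemma RR_eq m : rsum (enum (vtx n k)) (fun w => RRt w m) =
  (-1) ^ m * (t ^ (2 * m) * INR (walks S (2 * m) u u)) *
  sum_f_R0 (fun j => / (INR (fact (2 * j)) * INR (fact (2 * (m - j))))) m.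
Proof.
rewrite /RRt rsum_sum_f scal_sum; apply: PartSum.sum_eq => j /leP Hj.
have E : (m - j)%coq_nat = (m - j)%N by [].
pose G := fun w => aa (2 * j) w * aa (2 * (m - j)) w.
rewrite E (@rsum_ext _ _ _ (fun w => ((-1) ^ j * (-1) ^ (m - j)) * G w)); last first.
  by move=> w; rewrite /G !re_eq; ring.
rewrite rsum_scal /G pairR.
have -> : ((-1) ^ j * (-1) ^ (m - j)) = (-1) ^ m.
  rewrite -pow_add; congr (_ ^ _); lia.
have -> : (2 * j + 2 * (m - j) = 2 * m)%N by lia.
rewrite /Rdiv; ring.
Qed.

Lemma II_eq m : rsum (enum (vtx n k)) (fun w => IIt w m) =
  (-1) ^ m * (t ^ (2 * m + 2) * INR (walks S (2 * m + 2) u u)) *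
  sum_f_R0 (fun j => / (INR (fact (2 * j + 1)) * INR (fact (2 * (m - j) + 1)))) m.
Proof.
rewrite /IIt rsum_sum_f scal_sum; apply: PartSum.sum_eq => j /leP Hj.
have E : (m - j)%coq_nat = (m - j)%N by [].
pose G := fun w => aa (2 * j + 1) w * aa (2 * (m - j) + 1) w.
rewrite E (@rsum_ext _ _ _ (fun w => ((-1) ^ j * (-1) ^ (m - j)) * G w)); last first.
  by move=> w; rewrite /G !im_eq; ring.
rewrite rsum_scal /G pairR.
have -> : ((-1) ^ j * (-1) ^ (m - j)) = (-1) ^ m.
  rewrite -pow_add; congr (_ ^ _); lia.
have -> : (2 * j + 1 + (2 * (m - j) + 1) = 2 * m + 2)%N by lia.
rewrite /Rdiv; ring.
Qed.

Lemma RR0 : rsum (enum (vtx n k)) (fun w => RRt w 0) = 1.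
Proof. by rewrite RR_eq /= eqxx /=; field. Qed.

Lemma RRII m : rsum (enum (vtx n k)) (fun w => RRt w m.+1) + rsum (enum (vtx n k)) (fun w => IIt w m) = 0.
Proof.
rewrite RR_eq II_eq fact_even_odd.
have -> : (2 * m.+1 = 2 * m + 2)%N by lia.
rewrite /=; ring.
Qed.

End Core.

Lemma unitary n k (S : {set 'I_k}) (t : R) (u : {set 'I_n}) :
  0 < t -> u \in vtx n k ->
  rsum (enum (vtx n k)) (fun w =>
    Series (expRe_term S t u w) * Series (expRe_term S t u w) +
    Series (expIm_term S t u w) * Series (expIm_term S t u w)) = 1.
Proof.
move=> ht Hu.
have Hre w : is_series (expRe_term S t u w) (Series (expRe_term S t u w)).
  apply/Series_correct/ex_series_Rabs; exact: ex_re.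
have Him w : is_series (expIm_term S t u w) (Series (expIm_term S t u w)).
  apply/Series_correct/ex_series_Rabs; exact: ex_im.
have Hrr w : is_series (RRt S t u w) (Series (expRe_term S t u w) * Series (expRe_term S t u w)).
  rewrite /RRt; apply: is_series_mult; [exact: Hre|exact: Hre|exact: ex_re|exact: ex_re].
have Hii w : is_series (IIt S t u w) (Series (expIm_term S t u w) * Series (expIm_term S t u w)).
  rewrite /IIt; apply: is_series_mult; [exact: Him|exact: Him|exact: ex_im|exact: ex_im].
have HR := is_series_rsum (l := enum (vtx n k)) Hrr.
have HI := is_series_rsum (l := enum (vtx n k)) Hii.
rewrite rsum_plus.
set A := rsum _ (fun w => _ * _) in HR *.
set B := rsum _ (fun w => _ * _) in HI *.
have H1 : is_series (fun m => rsum (enum (vtx n k)) (fun w => RRt S t u w m.+1)) (A - 1).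
  apply: (@is_series_incr_1 R_AbsRing R_NormedModule (fun m => rsum (enum (vtx n k)) (fun w => RRt S t u w m))).
  have -> : plus (A - 1) (rsum (enum (vtx n k)) (fun w => RRt S t u w 0)) = A.
    by rewrite (RR0 S t Hu) /plus /=; ring.
  exact: HR.
have H2 := is_series_plus _ _ _ _ H1 HI.
have H3 : is_series (fun _ : nat => 0) (plus (A - 1) B).
  apply: is_series_ext H2 => m; exact: RRII.
have := is_series_unique _ _ H3; rewrite (is_series_unique _ _ is_series_zero) /plus /=.
lra.
Qed.

Theorem mainTheorem17 (n k : nat) (S : {set 'I_k}) :
  (1 <= k)%N -> (2 * k <= n)%N -> S != set0 ->
  (exists u v : {set 'I_n},
      [/\ u \in vtx n k, v \in vtx n k, u != v & pst S u v]) ->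
  n = (2 * k)%N.
Proof.
move=> Hk Hn HS [u [v [Hu Hv Huv [tau [Htau [re [im [Hre [Him Hsum]]]]]]]]].
move: Hn; rewrite leq_eqVlt => /orP[/eqP -> //|Hlt].
exfalso.
have [a [b [Hfu Hfv]]] := exists_swap Hu Hv Huv Hlt.
set v' := swap a b @: v in Hfv.
have Hw m : walks S m u v' = walks S m u v.
  by rewrite -{1}Hfu /v' walks_img //; exact: swap_inj.
have Hv' : v' \in vtx n k by rewrite /v' img_vtx //; exact: swap_inj.
have ERe : Series (expRe_term S tau u v) = re by apply/is_series_unique/is_series_Reals.
have EIm : Series (expIm_term S tau u v) = im by apply/is_series_unique/is_series_Reals.
have ERe' : Series (expRe_term S tau u v') = re.
  rewrite -ERe; apply: Series_ext => j; by rewrite /expRe_term Hw.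
have EIm' : Series (expIm_term S tau u v') = im.
  rewrite -EIm; apply: Series_ext => j; by rewrite /expIm_term Hw.
have U := unitary S Htau Hu.
have := @rsum_ge2 _ (enum (vtx n k)) (fun w => Series (expRe_term S tau u w) * Series (expRe_term S tau u w) +
    Series (expIm_term S tau u w) * Series (expIm_term S tau u w)) v v' (enum_uniq _).
rewrite !mem_enum => /(_ Hv Hv'); rewrite eq_sym => /(_ Hfv).
rewrite U ERe EIm ERe' EIm' Hsum.
have HH : forall w, 0 <= Series (expRe_term S tau u w) * Series (expRe_term S tau u w) +
    Series (expIm_term S tau u w) * Series (expIm_term S tau u w) by move=> w; nra.
move=> /(_ HH); lra.
Qed.
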